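(* For every $f\in C_b^*$ there is a sequence $(u_n)\subset K$ such that $u_n\to f$ pointwise on $\mathbb R\times H$ and $\sup_{n,t,x}|u_n(t,x)|\le1+\sup_{t,x}|f(t,x)|$.
   Context: $H$ is a real separable Hilbert space, $T>0$, and $D(A^* )$ is a dense linear subspace of $H$ (the common domain of the adjoint operators $A^*(t)$). $K$ is the set of real parts of elements of the complex linear span of the functions $(t,x)\mapsto\Phi(t)e^{i\langle x,h(t)\rangle}$ on $\mathbb R\times H$, where $\Phi\in C^1(\mathbb R,\mathbb R)$ is $T$-periodic and $h\in C^1(\mathbb R,H)$ is $T$-periodic with values in $D(A^* )$. $C_b^*$ is the set of continuous bounded $f:\mathbb R\times H\to\mathbb R$ that are $T$-periodic in the first variable. *)

(* Defs.v *)
From Stdlib Require Import Reals Lra.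
Open Scope R_scope.

Record RHilbert := {
  hcar :> Type;
  hzero : hcar;
  hadd : hcar -> hcar -> hcar;
  hopp : hcar -> hcar;
  hscal : R -> hcar -> hcar;
  hinner : hcar -> hcar -> R;
  hadd_assoc : forall x y z, hadd x (hadd y z) = hadd (hadd x y) z;
  hadd_comm : forall x y, hadd x y = hadd y x;
  hadd_zero : forall x, hadd x hzero = x;
  hadd_opp : forall x, hadd x (hopp x) = hzero;
  hscal_assoc : forall a b x, hscal a (hscal b x) = hscal (a * b) x;
  hscal_one : forall x, hscal 1 x = x;
  hscal_distr_v : forall a x y, hscal a (hadd x y) = hadd (hscal a x) (hscal a y);
  hscal_distr_s : forall a b x, hscal (a + b) x = hadd (hscal a x) (hscal b x);
  hinner_sym : forall x y, hinner x y = hinner y x;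
  hinner_add_l : forall x y z, hinner (hadd x y) z = hinner x z + hinner y z;
  hinner_scal_l : forall a x y, hinner (hscal a x) y = a * hinner x y;
  hinner_pos : forall x, 0 <= hinner x x;
  hinner_def : forall x, hinner x x = 0 -> x = hzero;
  hcomplete : forall u : nat -> hcar,
    (forall eps, eps > 0 -> exists N, forall m n, (m >= N)%nat -> (n >= N)%nat ->
        sqrt (hinner (hadd (u m) (hopp (u n))) (hadd (u m) (hopp (u n)))) < eps) ->
    exists l, forall eps, eps > 0 -> exists N, forall n, (n >= N)%nat ->
        sqrt (hinner (hadd (u n) (hopp l)) (hadd (u n) (hopp l))) < eps;
  hseparable : exists d : nat -> hcar, forall x eps, eps > 0 -> exists n,
        sqrt (hinner (hadd x (hopp (d n))) (hadd x (hopp (d n)))) < eps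
}.

Definition hnorm {H : RHilbert} (x : H) : R := sqrt (hinner H x x).
Definition hsub {H : RHilbert} (x y : H) : H := hadd H x (hopp H y).

Definition dense_subspace {H : RHilbert} (D : H -> Prop) : Prop :=
  D (hzero H) /\
  (forall x y, D x -> D y -> D (hadd H x y)) /\
  (forall a x, D x -> D (hscal H a x)) /\
  (forall x eps, eps > 0 -> exists y, D y /\ hnorm (hsub x y) < eps).

Definition C1_real (Phi : R -> R) : Prop :=
  exists Phi' : R -> R, (forall t, derivable_pt_lim Phi t (Phi' t)) /\ continuity Phi'.

Definition C1_H {H : RHilbert} (h : R -> H) : Prop :=
  exists h' : R -> H,
    (forall t eps, eps > 0 -> exists delta, delta > 0 /\ forall s, s <> 0 -> Rabs s < delta ->
        hnorm (hsub (hscal H (/ s) (hsub (h (t + s)) (h t))) (h' t)) < eps) /\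
    (forall t eps, eps > 0 -> exists delta, delta > 0 /\ forall s, Rabs (s - t) < delta ->
        hnorm (hsub (h' s) (h' t)) < eps).

Definition periodic {A : Type} (T : R) (g : R -> A) : Prop := forall t, g (t + T) = g t.

Fixpoint fsum (N : nat) (g : nat -> R) : R :=
  match N with O => 0 | S n => fsum n g + g n end.

(* The set K: real parts of complex linear combinations
   sum_k (a_k + i b_k) Phi_k(t) e^{i <x, h_k(t)>}, written out:
   Re((a + i b) Phi e^{i th}) = Phi (a cos th - b sin th). *)
Definition inK {H : RHilbert} (DA : H -> Prop) (T : R) (u : R -> H -> R) : Prop :=
  exists (N : nat) (a b : nat -> R) (Phi : nat -> R -> R) (h : nat -> R -> H),
    (forall k, (k < N)%nat ->
       C1_real (Phi k) /\ periodic T (Phi k) /\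
       C1_H (h k) /\ periodic T (h k) /\ (forall t, DA (h k t))) /\
    (forall t x, u t x =
       fsum N (fun k => Phi k t * (a k * cos (hinner H x (h k t))
                                  - b k * sin (hinner H x (h k t))))).

Definition Cb_star {H : RHilbert} (T : R) (f : R -> H -> R) : Prop :=
  (forall t x eps, eps > 0 -> exists delta, delta > 0 /\ forall s y,
      Rabs (s - t) < delta -> hnorm (hsub y x) < delta -> Rabs (f s y - f t x) < eps) /\
  (exists M, forall t x, Rabs (f t x) <= M) /\
  (forall t x, f (t + T) x = f t x).

Definition is_sup_abs {H : RHilbert} (g : R -> H -> R) (S : R) : Prop :=
  is_lub (fun y => exists t x, y = Rabs (g t x)) S.

(* Main.v *)
Require Import Defs.
From Stdlib Require Import Reals Lra Lia ZArith Classical IndefiniteDescription Cantor.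
Open Scope R_scope.

Lemma fsum_ext N g h : (forall i, (i < N)%nat -> g i = h i) -> fsum N g = fsum N h.
Proof. induction N; simpl; intros; auto. rewrite IHN by (intros; apply H; lia). rewrite H by lia; auto. Qed.

Lemma fsum_plus N g h : fsum N (fun i => g i + h i) = fsum N g + fsum N h.
Proof. induction N; simpl; [lra|]. rewrite IHN; lra. Qed.

Lemma fsum_scal N c g : fsum N (fun i => c * g i) = c * fsum N g.
Proof. induction N; simpl; [lra|]. rewrite IHN; lra. Qed.

Lemma fsum_le N g h : (forall i, (i < N)%nat -> g i <= h i) -> fsum N g <= fsum N h.
Proof. induction N; simpl; intros; [lra|]. specialize (IHN (fun i Hi => H i ltac:(lia))). specialize (H N ltac:(lia)). lra. Qed.

Lemma fsum_nonneg N g : (forall i, (i < N)%nat -> 0 <= g i) -> 0 <= fsum N g.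
Proof. intros. replace 0 with (fsum N (fun _ => 0)). apply fsum_le; auto.
 induction N; simpl; auto. rewrite IHN; [lra|]. intros; apply H; lia. Qed.

Lemma fsum_const N c : fsum N (fun _ => c) = INR N * c.
Proof. induction N; simpl fsum; [simpl; lra|]. rewrite IHN, S_INR; lra. Qed.

Lemma fsum_abs N g : Rabs (fsum N g) <= fsum N (fun i => Rabs (g i)).
Proof. induction N; simpl; [rewrite Rabs_R0; lra|]. eapply Rle_trans; [apply Rabs_triang|]. lra. Qed.

Lemma fsum_single N g i : (i < N)%nat -> (forall l, (l < N)%nat -> l <> i -> g l = 0) -> fsum N g = g i.
Proof. induction N; intros; [lia|]. simpl. destruct (Nat.eq_dec i N).
 - subst. replace (fsum N g) with (fsum N (fun _ => 0)). rewrite fsum_const; lra.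
   apply fsum_ext; intros; symmetry; apply H0; lia.
 - rewrite IHN by (auto; lia). rewrite (H0 N) by lia. lra. Qed.

Lemma fsum_le_term N g i : (i < N)%nat -> (forall l, (l < N)%nat -> 0 <= g l) -> g i <= fsum N g.
Proof. induction N; intros; [lia|]. simpl. destruct (Nat.eq_dec i N).
 - subst. assert (0 <= fsum N g) by (apply fsum_nonneg; intros; apply H0; lia). lra.
 - assert (g i <= fsum N g) by (apply IHN; intros; [lia| apply H0; lia]). specialize (H0 N ltac:(lia)). lra. Qed.

Lemma fsum_mono_N N M g : (N <= M)%nat -> (forall l, (l < M)%nat -> 0 <= g l) -> fsum N g <= fsum M g.
Proof. intros HNM. induction HNM as [|M HNM IH]; intros; [lra|]. simpl. pose proof (H M ltac:(lia)).
 assert (fsum N g <= fsum M g) by (apply IH; intros; apply H; lia). lra. Qed.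

Lemma fsum_app N1 N2 g : fsum (N1 + N2) g = fsum N1 g + fsum N2 (fun k => g (N1 + k)%nat).
Proof. induction N2; simpl. rewrite Nat.add_0_r; lra. rewrite Nat.add_succ_r; simpl. rewrite IHN2; lra. Qed.

Lemma fsum_telescope N G : fsum N (fun j => G j - G (S j)) = G O - G N.
Proof. induction N; simpl; [lra|]. rewrite IHN; lra. Qed.

Fixpoint fprod (d : nat) (g : nat -> R) : R := match d with O => 1 | S d => fprod d g * g d end.

Lemma fprod_ext d g h : (forall i, (i < d)%nat -> g i = h i) -> fprod d g = fprod d h.
Proof. induction d; simpl; intros; auto. rewrite IHd by (intros; apply H; lia). rewrite H by lia; auto. Qed.

Lemma fprod_nonneg d g : (forall i, (i < d)%nat -> 0 <= g i) -> 0 <= fprod d g.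
Proof. induction d; simpl; intros; [lra|]. apply Rmult_le_pos; [apply IHd; intros; apply H; lia| apply H; lia]. Qed.

Lemma fprod_one d g : (forall i, (i < d)%nat -> g i = 1) -> fprod d g = 1.
Proof. induction d; simpl; intros; auto. rewrite IHd, H by (intros; try apply H; lia). lra. Qed.

Lemma fprod_mark d g i0 c : (i0 < d)%nat ->
  fprod d (fun l => g l * (if Nat.eqb l i0 then c else 1)) = fprod d g * c.
Proof. induction d; intros; [lia|]. simpl. destruct (Nat.eqb_spec d i0).
 - subst i0. rewrite (fprod_ext _ _ g). lra. intros. destruct (Nat.eqb_spec i d); [lia|lra].
 - rewrite IHd by lia. lra. Qed.

Lemma fprod_le1 d b : (forall l, (l < d)%nat -> 0 <= b l <= 1) -> fprod d b <= 1.
Proof. induction d; simpl; intros; [lra|].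
 assert (0 <= fprod d b) by (apply fprod_nonneg; intros; apply H; lia).
 assert (fprod d b <= 1) by (apply IHd; intros; apply H; lia).
 specialize (H d ltac:(lia)). nra. Qed.

Lemma fprod_le_one d b i0 : (i0 < d)%nat -> (forall l, (l < d)%nat -> 0 <= b l <= 1) -> fprod d b <= b i0.
Proof. induction d; intros; [lia|]. simpl.
 assert (0 <= fprod d b) by (apply fprod_nonneg; intros; apply H0; lia).
 destruct (Nat.eq_dec i0 d).
 - subst i0. assert (fprod d b <= 1) by (apply fprod_le1; intros; apply H0; lia).
   specialize (H0 d ltac:(lia)). nra.
 - assert (fprod d b <= b i0) by (apply IHd; intros; [lia|apply H0; lia]).
   specialize (H0 d ltac:(lia)). nra. Qed.

Definition upd (J : nat -> nat) (d j : nat) : nat -> nat := fun i => if Nat.eqb i d then j else J i.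

Fixpoint msum (N d : nat) (F : (nat -> nat) -> R) : R :=
  match d with O => F (fun _ => O) | S d => fsum N (fun j => msum N d (fun J => F (upd J d j))) end.

Lemma msum_ext N d F G : (forall J, F J = G J) -> msum N d F = msum N d G.
Proof. revert F G; induction d; simpl; intros; auto. apply fsum_ext; intros. apply IHd; auto. Qed.

Lemma msum_le N d F G : (forall J, (forall i, (i < d)%nat -> (J i < N)%nat) -> F J <= G J) -> msum N d F <= msum N d G.
Proof. revert F G; induction d; simpl; intros. apply H; intros; lia.
 apply fsum_le; intros j Hj. apply IHd; intros J HJ. apply H. intros i Hi. unfold upd.
 destruct (Nat.eqb_spec i d); auto. apply HJ; lia. Qed.

Lemma msum_plus N d F G : msum N d (fun J => F J + G J) = msum N d F + msum N d G.
Proof. revert F G; induction d; simpl; intros; auto. rewrite <- fsum_plus. apply fsum_ext; intros; apply IHd. Qed.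

Lemma msum_scal N d c F : msum N d (fun J => c * F J) = c * msum N d F.
Proof. revert F; induction d; simpl; intros; auto. rewrite <- fsum_scal. apply fsum_ext; intros; apply IHd. Qed.

Lemma msum_abs N d F : Rabs (msum N d F) <= msum N d (fun J => Rabs (F J)).
Proof. revert F; induction d; simpl; intros. lra. eapply Rle_trans; [apply fsum_abs|]. apply fsum_le; intros; apply IHd. Qed.

Lemma msum_prod N d a : msum N d (fun J => fprod d (fun i => a i (J i))) = fprod d (fun i => fsum N (a i)).
Proof. revert a. induction d; intros; simpl; auto.
 transitivity (fsum N (fun j => msum N d (fun J => fprod d (fun i => a i (J i))) * a d j)).
 - apply fsum_ext; intros j Hj. rewrite <- (Rmult_comm (a d j)), <- msum_scal. apply msum_ext; intros J.
   simpl. unfold upd at 2. rewrite Nat.eqb_refl. rewrite (fprod_ext d _ (fun i => a i (J i))). lra.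
   intros. unfold upd. destruct (Nat.eqb_spec i d); auto; lia.
 - rewrite IHd. rewrite <- fsum_scal. apply fsum_ext. intros; lra. Qed.

Inductive TP (m : nat) : (R -> R) -> Prop :=
| TP_const c : TP m (fun _ => c)
| TP_cos k a p : (1 <= k <= m)%nat -> TP m (fun u => a * cos (INR k * u + p))
| TP_add f g : TP m f -> TP m g -> TP m (fun u => f u + g u)
| TP_ext f g : TP m f -> (forall u, f u = g u) -> TP m g.

Lemma TP_weaken m f : TP m f -> TP (S m) f.
Proof. induction 1. apply TP_const. apply TP_cos; lia. apply TP_add; auto. eapply TP_ext; eauto. Qed.

Lemma cos_cos a b : cos a * cos b = (cos (a + b) + cos (a - b)) / 2.
Proof. rewrite cos_plus, cos_minus. lra. Qed.

Lemma TP_mul1 m f : TP m f -> TP (S m) (fun u => f u * ((1 + cos u) / 2)).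
Proof. induction 1.
 - eapply TP_ext. apply TP_add. apply (TP_const _ (c/2)). apply (TP_cos _ 1 (c/2) 0). lia.
   intros; simpl. rewrite Rmult_1_l, Rplus_0_r. lra.
 - destruct (Nat.eq_dec k 1).
   + subst k. eapply TP_ext.
     apply TP_add. apply TP_add. apply (TP_cos _ 1 (a/2) p); lia.
     apply (TP_cos _ 2 (a/4) p); lia. apply (TP_const _ (a/4 * cos p)).
     intros u. replace (INR 1) with 1 by reflexivity. replace (INR 2) with 2 by (simpl; ring).
     assert (E : cos (1*u+p) * cos u = (cos (2*u+p) + cos p)/2).
     { rewrite cos_cos. replace (1*u+p+u) with (2*u+p) by ring. replace (1*u+p-u) with p by ring. reflexivity. }
     transitivity (a/2*cos (1*u+p) + a/2*(cos (1*u+p) * cos u)); [rewrite E; field| field].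
   + eapply TP_ext.
     apply TP_add. apply TP_add. apply (TP_cos _ k (a/2) p); lia.
     apply (TP_cos _ (S k) (a/4) p); lia. apply (TP_cos _ (k - 1) (a/4) p); lia.
     intros u. rewrite S_INR, minus_INR by lia. replace (INR 1) with 1 by reflexivity.
     assert (E : cos (INR k*u+p) * cos u = (cos ((INR k + 1)*u+p) + cos ((INR k - 1) * u + p))/2).
     { rewrite cos_cos. replace (INR k*u+p+u) with ((INR k + 1)*u+p) by ring. replace (INR k*u+p-u) with ((INR k - 1)*u+p) by ring. reflexivity. }
     transitivity (a/2*cos (INR k*u+p) + a/2*(cos (INR k*u+p) * cos u)); [rewrite E; field| field].
 - apply (TP_ext _ _ _ (TP_add _ _ _ IHTP1 IHTP2)). intros; cbv beta; ring.
 - eapply TP_ext. apply IHTP. intros; simpl. rewrite H0; auto. Qed.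

Lemma TP_kernel m : TP m (fun u => ((1 + cos u) / 2) ^ m).
Proof. induction m. apply (TP_ext _ _ _ (TP_const 0 1)); intros; simpl; auto. eapply TP_ext. apply TP_mul1, IHm. intros; simpl; ring. Qed.

Definition grid (N j : nat) : R := 2 * PI * INR j / INR N.

Lemma sin_Zperiod x k : sin (x + 2 * IZR k * PI) = sin x.
Proof. destruct (Z_le_gt_dec 0 k).
 - rewrite <- (Z2Nat.id k) by auto. rewrite <- INR_IZR_INZ. apply sin_period.
 - rewrite <- (sin_period _ (Z.to_nat (- k))). rewrite INR_IZR_INZ, Z2Nat.id by lia.
   rewrite opp_IZR. f_equal; ring. Qed.

Lemma cos_Zperiod x k : cos (x + 2 * IZR k * PI) = cos x.
Proof. destruct (Z_le_gt_dec 0 k).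
 - rewrite <- (Z2Nat.id k) by auto. rewrite <- INR_IZR_INZ. apply cos_period.
 - rewrite <- (cos_period _ (Z.to_nat (- k))). rewrite INR_IZR_INZ, Z2Nat.id by lia.
   rewrite opp_IZR. f_equal; ring. Qed.

Lemma cos_grid_zero N k A : (1 <= k < N)%nat ->
  fsum N (fun j => cos (A - INR j * (2 * PI * INR k / INR N))) = 0.
Proof. intros Hk. set (b := 2 * PI * INR k / INR N).
 assert (HN : 0 < INR N) by (apply lt_0_INR; lia).
 assert (Hkn : INR k < INR N) by (apply lt_INR; lia).
 assert (Hk0 : 0 < INR k) by (apply lt_0_INR; lia).
 assert (Hs : sin (b/2) <> 0).
 { apply Rgt_not_eq, sin_gt_0. unfold b. apply Rlt_gt. pose proof PI_RGT_0.
   apply Rmult_lt_0_compat; [|lra]. apply Rdiv_lt_0_compat; [|lra]. nra.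
   unfold b. apply Rmult_lt_reg_r with (INR N); auto. unfold Rdiv.
   replace (2 * PI * INR k * / INR N * / 2 * INR N) with (PI * INR k) by (field; lra).
   pose proof PI_RGT_0. nra. }
 set (G := fun j => sin (A + b/2 - INR j * b)).
 assert (E : forall j, 2 * sin (b/2) * cos (A - INR j * b) = G j - G (S j)).
 { intros j. unfold G. cbv beta. rewrite S_INR.
   replace (A + b / 2 - (INR j + 1) * b) with ((A - INR j * b) - b/2) by field.
   replace (A + b / 2 - INR j * b) with ((A - INR j * b) + b/2) by ring.
   set (X := A - INR j * b). rewrite sin_plus, sin_minus. ring. }
 assert (2 * sin (b/2) * fsum N (fun j => cos (A - INR j * b)) = 0).
 { rewrite <- fsum_scal. rewrite (fsum_ext _ _ (fun j => G j - G (S j))) by (intros; apply E).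
   rewrite fsum_telescope. unfold G. cbv beta. simpl INR.
   replace (A + b / 2 - INR N * b) with ((A + b/2 - 0 * b) + 2 * IZR (- Z.of_nat k) * PI).
   rewrite sin_Zperiod; ring. rewrite opp_IZR, <- INR_IZR_INZ. unfold b. field. lra. }
 apply Rmult_integral in H as [H|H]; auto. lra. Qed.

Lemma TP_grid m N f : (m < N)%nat -> TP m f ->
  forall th, fsum N (fun j => f (th - grid N j)) = fsum N (fun j => f (0 - grid N j)).
Proof. intros HmN HT. induction HT; intros th.
 - auto.
 - assert (HN : 0 < INR N) by (apply lt_0_INR; lia).
   assert (forall th, fsum N (fun j => a * cos (INR k * (th - grid N j) + p)) = 0).
   { intros. rewrite fsum_scal. rewrite (fsum_ext _ _ (fun j => cos ((INR k * th0 + p) - INR j * (2 * PI * INR k / INR N)))).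
     rewrite cos_grid_zero by lia. ring. intros; unfold grid. f_equal. field. lra. }
   rewrite !H0; auto.
 - rewrite !fsum_plus, IHHT1, IHHT2; auto.
 - rewrite <- !(fsum_ext _ _ _ (fun j _ => H (_ - grid N j))). auto. Qed.

Definition kw (m N : nat) (th : R) (j : nat) : R := ((1 + cos (th - grid N j)) / 2) ^ m.

Lemma kw_nonneg m N th j : 0 <= kw m N th j.
Proof. unfold kw. apply pow_le. pose proof (COS_bound (th - grid N j)). lra. Qed.

Lemma kw_le1 m N th j : kw m N th j <= 1.
Proof. unfold kw. pose proof (COS_bound (th - grid N j)). apply Rle_trans with (1 ^ m); [apply pow_incr; split; lra| rewrite pow1; lra]. Qed.

Definition kZ (m : nat) : R := fsum (S m) (fun j => kw m (S m) 0 j).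

Lemma kZ_const m th : fsum (S m) (fun j => kw m (S m) th j) = kZ m.
Proof. unfold kZ, kw. apply (TP_grid m (S m) (fun u => ((1 + cos u)/2)^m)); [lia|apply TP_kernel]. Qed.

Lemma kZ_ge1 m : 1 <= kZ m.
Proof. unfold kZ. eapply Rle_trans; [|apply fsum_le_term with (i := O); [lia|intros; apply kw_nonneg]].
 unfold kw, grid. replace (0 - 2 * PI * INR 0 / INR (S m)) with 0. rewrite cos_0.
 replace ((1+1)/2) with 1 by lra. rewrite pow1; lra. simpl INR at 1. field. apply not_0_INR; lia. Qed.

Lemma kw_far m N th j dl : cos (th - grid N j) <= cos dl -> kw m N th j <= ((1 + cos dl)/2) ^ m.
Proof. intros. unfold kw. apply pow_incr. pose proof (COS_bound (th - grid N j)). split; lra. Qed.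

Lemma cos_near r dl : 0 < dl < PI -> cos r > cos dl -> exists k : Z, Rabs (r - 2 * PI * IZR k) < dl.
Proof. intros Hd Hc. pose proof PI_RGT_0.
 set (x := r / (2 * PI) + /2). destruct (archimed x) as [H1 H2].
 exists (up x - 1)%Z. rewrite minus_IZR. set (n := IZR (up x)) in *.
 assert (Hr1 : - PI <= r - 2 * PI * (n - 1)).
 { unfold x in H2. apply Rmult_le_compat_l with (r := 2*PI) in H2; [|lra].
   replace (2 * PI * (n - (r / (2 * PI) + / 2))) with (2*PI*n - r - PI) in H2 by (field; lra). nra. }
 assert (Hr2 : r - 2 * PI * (n - 1) <= PI).
 { unfold x in H1. apply Rmult_lt_compat_l with (r := 2*PI) in H1; [|lra].
   replace (2 * PI * (r / (2 * PI) + / 2)) with (r + PI) in H1 by (field; lra). lra. }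
 set (y := r - 2 * PI * (n - 1)) in *.
 assert (Hcy : cos y = cos r).
 { unfold y. replace (r - 2 * PI * (n - 1)) with (r + 2 * IZR (- (up x - 1)) * PI).
   apply cos_Zperiod. rewrite opp_IZR, minus_IZR. fold n. ring. }
 destruct (Rlt_or_le (Rabs y) dl); auto. exfalso.
 assert (cos (Rabs y) <= cos dl).
 { destruct (Req_dec (Rabs y) dl). rewrite H3; lra.
   left. assert (dl < Rabs y) by (destruct H0; auto; congruence).
   apply cos_decreasing_1; try lra. apply Rabs_le; lra. }
 assert (cos (Rabs y) = cos y). { destruct (Rcase_abs y). rewrite Rabs_left, cos_neg; auto. rewrite Rabs_right; auto. }
 lra. Qed.

Lemma bern2 a m : 0 <= a -> 1 + INR m * a + INR m * (INR m - 1) / 2 * a^2 <= (1 + a) ^ m.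
Proof. intros Ha. induction m. simpl; lra. rewrite S_INR. simpl pow.
 assert (0 <= INR m) by apply pos_INR.
 assert (0 <= INR m * (INR m - 1) / 2 * a^2 * a).
 { destruct m. simpl; lra. rewrite S_INR. assert (0 <= INR m) by apply pos_INR. apply Rmult_le_pos; [|lra].
   apply Rmult_le_pos; [|simpl; nra]. nra. }
 nra. Qed.

Lemma geom_small q e : 0 < q < 1 -> 0 < e -> exists m : nat, (0 < m)%nat /\ INR (S m) * q ^ m <= e.
Proof. intros Hq He. set (a := / q - 1). assert (Ha : 0 < a) by (unfold a; apply Rlt_0_minus; rewrite <- Rinv_1; apply Rinv_lt_contravar; lra).
 destruct (archimed (6 / (e * a^2))) as [H1 _].
 set (M := Z.to_nat (up (6 / (e * a^2)))).
 assert (HM : 6 / (e * a^2) < INR M).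
 { unfold M. 
   assert (0 < 6/(e * a^2)) by (apply Rdiv_lt_0_compat; [lra| apply Rmult_lt_0_compat; nra]).
   rewrite INR_IZR_INZ, Z2Nat.id; auto. apply le_IZR. exact (Rlt_le _ _ (Rlt_trans _ _ _ H H1)). }
 exists (S (S M)). split; [lia|].
 pose proof (bern2 a (S (S M)) ltac:(lra)). rewrite !S_INR in *.
 assert (HqE : (1 + a) = / q) by (unfold a; ring).
 rewrite HqE, pow_inv in H. assert (0 < q ^ S (S M)) by (apply pow_lt; lra).
 assert (0 <= INR M) by apply pos_INR.
 set (P := q ^ S (S M)) in *.
 assert (Hb : (INR M + 1 + 1) * (INR M + 1 + 1 - 1) / 2 * a ^ 2 <= / P) by (assert (0 <= (INR M + 1 + 1)*a) by nra; lra).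
 assert (HP : P * ((INR M + 1 + 1) * (INR M + 1) / 2 * a ^ 2) <= 1).
 { replace (INR M + 1 + 1 - 1) with (INR M + 1) in Hb by ring.
   apply Rmult_le_compat_l with (r := P) in Hb; [|lra]. rewrite Rinv_r in Hb; lra. }
 assert (HMe : 6 < INR M * (e * a^2)).
 { apply Rmult_lt_compat_r with (r := e * a^2) in HM; [|apply Rmult_lt_0_compat; nra].
   unfold Rdiv in HM. rewrite Rmult_assoc, Rinv_l in HM; [lra|]. apply Rgt_not_eq, Rmult_lt_0_compat; nra. }
 assert (0 < a^2) by nra.
 assert (P * ((INR M + 2) * (INR M + 1) * a^2) <= 2) by nra.
 assert ((INR M + 1 + 1 + 1) * 6 <= e * ((INR M + 2) * (INR M + 1) * a^2)) by nra.
 nra. Qed.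

Section Hilb.
Variable H : RHilbert.

Notation "<< x , y >>" := (hinner H x y).

Lemma inner_add_r x y z : << x, hadd H y z >> = << x, y >> + << x, z >>.
Proof. rewrite hinner_sym, hinner_add_l, !(hinner_sym H x). auto. Qed.
Lemma inner_scal_r a x y : << x, hscal H a y >> = a * << x, y >>.
Proof. rewrite hinner_sym, hinner_scal_l, (hinner_sym H x). auto. Qed.
Lemma inner_zero_l y : << hzero H, y >> = 0.
Proof. pose proof (hinner_add_l H (hzero H) (hzero H) y). rewrite hadd_zero in H0. lra. Qed.
Lemma inner_zero_r y : << y, hzero H >> = 0.
Proof. rewrite hinner_sym; apply inner_zero_l. Qed.
Lemma inner_opp_l x y : << hopp H x, y >> = - << x, y >>.
Proof. pose proof (hinner_add_l H x (hopp H x) y). rewrite hadd_opp, inner_zero_l in H0. lra. Qed.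
Lemma inner_sub_l x y z : << hsub x y, z >> = << x, z >> - << y, z >>.
Proof. unfold hsub. rewrite hinner_add_l, inner_opp_l. lra. Qed.
Lemma inner_sub_r x y z : << z, hsub x y >> = << z, x >> - << z, y >>.
Proof. rewrite hinner_sym, inner_sub_l, !(hinner_sym H _ z). auto. Qed.
Lemma inner_null x y : << x, x >> = 0 -> << x, y >> = 0.
Proof. intros. apply hinner_def in H0. subst. apply inner_zero_l. Qed.

Fixpoint vsum (n : nat) (g : nat -> H) : H :=
  match n with O => hzero H | S n => hadd H (vsum n g) (g n) end.

Lemma inner_vsum_l n g y : << vsum n g, y >> = fsum n (fun i => << g i, y >>).
Proof. induction n; simpl. apply inner_zero_l. rewrite hinner_add_l, IHn. auto. Qed.
Lemma inner_vsum_r n g y : << y, vsum n g >> = fsum n (fun i => << y, g i >>).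
Proof. rewrite hinner_sym, inner_vsum_l. apply fsum_ext; intros; apply hinner_sym. Qed.
Lemma vsum_ext n g h : (forall i, (i < n)%nat -> g i = h i) -> vsum n g = vsum n h.
Proof. induction n; simpl; intros; auto. rewrite IHn by (intros; apply H0; lia). rewrite H0 by lia; auto. Qed.

Variable a : nat -> H.

Definition proj (e : nat -> H) (n : nat) (y : H) : H := vsum n (fun i => hscal H (<< y, e i >>) (e i)).
Definition normz (w : H) : H := hscal H (/ hnorm w) w.
Definition newvec (e : nat -> H) (n : nat) : H := normz (hsub (a n) (proj e n (a n))).

Fixpoint es (n : nat) : nat -> H :=
  match n with O => fun _ => hzero H
  | S n => fun i => if Nat.eqb i n then newvec (es n) n else es n i end.

Definition e (i : nat) : H := es (S i) i.

Lemma es_e n i : (i < n)%nat -> es n i = e i.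
Proof. induction n; intros; [lia|]. simpl. destruct (Nat.eqb_spec i n).
 - subst. unfold e. simpl. rewrite Nat.eqb_refl. auto.
 - apply IHn; lia. Qed.

Definition P (n : nat) (y : H) : H := proj e n y.

Lemma e_def n : e n = normz (hsub (a n) (P n (a n))).
Proof. unfold e. simpl. rewrite Nat.eqb_refl. unfold newvec. f_equal. f_equal. unfold proj, P, proj.
 apply vsum_ext; intros. rewrite es_e; auto. Qed.

Definition eps (i : nat) : R := << e i, e i >>.

Lemma normz_inner w y : << normz w, y >> = / hnorm w * << w, y >>.
Proof. unfold normz. apply hinner_scal_l. Qed.

Lemma eps01 i : eps i = 0 \/ eps i = 1.
Proof. unfold eps. rewrite e_def. set (w := hsub (a i) (P i (a i))).
 rewrite normz_inner. unfold normz. rewrite inner_scal_r. unfold hnorm.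
 destruct (Req_dec (<< w, w >>) 0). left. rewrite H0. ring.
 right. pose proof (hinner_pos H w). pose proof (sqrt_lt_R0 _ (ltac:(lra) : 0 < << w, w >>)).
 replace (/ sqrt (<< w, w >>) * (/ sqrt (<< w, w >>) * << w, w >>)) with (<< w, w >> / (sqrt (<< w, w >>) * sqrt (<< w, w >>))) by (field; lra).
 rewrite sqrt_sqrt by lra. field; auto. Qed.

Lemma eps_zero i y : eps i = 0 -> << y, e i >> = 0.
Proof. intros. rewrite hinner_sym. apply inner_null; auto. Qed.

Lemma y_eps y i : << y, e i >> * eps i = << y, e i >>.
Proof. destruct (eps01 i) as [E|E]; rewrite E; [rewrite eps_zero|]; auto; ring. Qed.

Definition ONn (n : nat) := forall i j, (i < n)%nat -> (j < n)%nat -> i <> j -> << e i, e j >> = 0.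

Lemma sum_ortho n c i : ONn n -> (i < n)%nat -> fsum n (fun l => c l * << e l, e i >>) = c i * eps i.
Proof. intros. rewrite (fsum_single _ _ i); auto. intros. rewrite H0; auto. ring. Qed.

Lemma ON_all n : ONn n.
Proof. induction n. intros i j Hi; lia.
 assert (Hn : forall i, (i < n)%nat -> << e n, e i >> = 0).
 { intros i Hi. rewrite e_def, normz_inner, inner_sub_l. unfold P, proj. rewrite inner_vsum_l.
   rewrite (fsum_ext _ _ (fun l => << a n, e l >> * << e l, e i >>)).
   rewrite sum_ortho by auto. rewrite y_eps. ring. intros; apply hinner_scal_l. }
 intros i j Hi Hj Hij. destruct (Nat.eq_dec i n); destruct (Nat.eq_dec j n); subst; try lia.
 apply Hn; lia. rewrite hinner_sym. apply Hn; lia. apply IHn; lia. Qed.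

Definition Vc (n : nat) (c : nat -> R) : H := vsum n (fun i => hscal H (c i) (e i)).

Lemma Vc_inner_l n c y : << Vc n c, y >> = fsum n (fun i => c i * << e i, y >>).
Proof. unfold Vc. rewrite inner_vsum_l. apply fsum_ext; intros. apply hinner_scal_l. Qed.

Lemma Vc_inner n c d : << Vc n c, Vc n d >> = fsum n (fun i => c i * d i * eps i).
Proof. rewrite Vc_inner_l. apply fsum_ext; intros i Hi. rewrite hinner_sym, Vc_inner_l.
 rewrite sum_ortho; auto. unfold eps; ring. apply ON_all. Qed.

Lemma P_Vc n y : P n y = Vc n (fun i => << y, e i >>).
Proof. reflexivity. Qed.

Lemma dist_Vc n c y : << hsub (Vc n c) y, hsub (Vc n c) y >> =
  << hsub y (P n y), hsub y (P n y) >> + fsum n (fun i => (c i * eps i - << y, e i >>)^2).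
Proof.
 set (S1 := fsum n (fun i => c i * c i * eps i)).
 set (S2 := fsum n (fun i => c i * << y, e i >>)).
 set (S3 := fsum n (fun i => << y, e i >> * << y, e i >>)).
 assert (E1 : << Vc n c, Vc n c >> = S1) by apply Vc_inner.
 assert (E2 : << Vc n c, y >> = S2).
 { rewrite Vc_inner_l. apply fsum_ext; intros. rewrite hinner_sym; auto. }
 assert (E3 : << y, Vc n c >> = S2) by (rewrite hinner_sym; auto).
 assert (E4 : << P n y, P n y >> = S3).
 { rewrite P_Vc, Vc_inner. apply fsum_ext; intros. rewrite Rmult_assoc, y_eps; auto. }
 assert (E5 : << P n y, y >> = S3).
 { rewrite P_Vc, Vc_inner_l. apply fsum_ext; intros. rewrite hinner_sym; auto. }
 assert (E6 : << y, P n y >> = S3) by (rewrite hinner_sym; auto).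
 assert (E7 : fsum n (fun i => (c i * eps i - << y, e i >>)^2) = S1 - 2 * S2 + S3).
 { rewrite (fsum_ext n _ (fun i => c i * c i * eps i + ((-2) * (c i * << y, e i >>) + << y, e i >> * << y, e i >>))).
   rewrite !fsum_plus, fsum_scal. unfold S1, S2, S3. ring.
   intros i Hi. destruct (eps01 i) as [E|E]; rewrite E. rewrite eps_zero by auto. ring. ring. }
 rewrite !inner_sub_l, !inner_sub_r. rewrite E7. lra. Qed.

Lemma bessel n y : << hsub y (P n y), hsub y (P n y) >> = << y, y >> - fsum n (fun i => << y, e i >> ^ 2).
Proof. rewrite !inner_sub_l, !inner_sub_r. rewrite P_Vc, Vc_inner, !Vc_inner_l. rewrite (hinner_sym H y (Vc n _)), Vc_inner_l.
 assert (forall f g : nat -> R, (forall i, (i < n)%nat -> f i = g i) -> fsum n f = fsum n g) by (intros; apply fsum_ext; auto).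
 rewrite (H0 (fun i => << y, e i >> * << y, e i >> * eps i) (fun i => << y, e i >> ^ 2)).
 rewrite (H0 (fun i => << y, e i >> * << e i, y >>) (fun i => << y, e i >> ^ 2)). ring.
 intros; rewrite hinner_sym; ring. intros; rewrite Rmult_assoc, y_eps; ring. Qed.

Lemma coord_bound n y i : (i < n)%nat -> << y, e i >> ^ 2 <= << y, y >>.
Proof. intros. pose proof (bessel n y). pose proof (hinner_pos H (hsub y (P n y))).
 assert (<< y, e i >> ^ 2 <= fsum n (fun i => << y, e i >> ^ 2)) by (apply (fsum_le_term n (fun i => << y, e i >> ^ 2)); auto; intros; apply pow2_ge_0). lra. Qed.

Lemma a_full j : fsum (S j) (fun i => << a j, e i >> ^ 2) = << a j, a j >>.
Proof. change (fsum (S j) (fun i => << a j, e i >> ^ 2)) with (fsum j (fun i => << a j, e i >> ^ 2) + << a j, e j >> ^ 2). set (w := hsub (a j) (P j (a j))).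
 assert (Hw : << w, w >> = << a j, a j >> - fsum j (fun i => << a j, e i >> ^ 2)) by apply bessel.
 assert (Hwa : << w, a j >> = << w, w >>).
 { unfold w. rewrite !inner_sub_l, !inner_sub_r. rewrite (hinner_sym H (a j) (P j (a j))).
   assert (<< P j (a j), P j (a j) >> = << P j (a j), a j >>); [|lra].
   rewrite P_Vc, Vc_inner, Vc_inner_l. apply fsum_ext; intros. rewrite Rmult_assoc, y_eps, hinner_sym; auto. }
 assert (<< a j, e j >> ^ 2 = << w, w >>).
 { rewrite e_def. fold w. rewrite hinner_sym, normz_inner, Hwa. unfold hnorm.
   pose proof (hinner_pos H w). destruct (Req_dec (<< w, w >>) 0). rewrite H1. ring.
   pose proof (sqrt_lt_R0 _ (ltac:(lra) : 0 < << w, w >>)).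
   rewrite Rpow_mult_distr, pow_inv. simpl. rewrite Rmult_1_r, sqrt_sqrt by lra. field. auto. }
 lra. Qed.

Lemma a_in_span j n : (j < n)%nat -> << hsub (a j) (P n (a j)), hsub (a j) (P n (a j)) >> = 0.
Proof. intros. pose proof (hinner_pos H (hsub (a j) (P n (a j)))). rewrite bessel in *.
 assert (fsum (S j) (fun i => << a j, e i >> ^ 2) <= fsum n (fun i => << a j, e i >> ^ 2)).
 { apply fsum_mono_N. lia. intros; apply pow2_ge_0. }
 rewrite a_full in H2. lra. Qed.

Lemma best_approx j n x : (j < n)%nat ->
  << hsub x (P n x), hsub x (P n x) >> <= << hsub x (a j), hsub x (a j) >>.
Proof. intros. set (v := P n (a j)). set (u := hsub (a j) v).
 assert (Hu : forall z, << u, z >> = 0) by (intros; apply inner_null; apply a_in_span; auto).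
 assert (Hav : forall z, << a j, z >> = << v, z >>) by (intros; pose proof (Hu z); unfold u in *; rewrite inner_sub_l in *; lra).
 assert (Hav' : forall z, << z, a j >> = << z, v >>) by (intros; rewrite !(hinner_sym H z); auto).
 pose proof (dist_Vc n (fun i => << a j, e i >>) x). fold (P n (a j)) in H1. fold v in H1.
 assert (0 <= fsum n (fun i => ((fun i0 : nat => << a j, e i0 >>) i * eps i - << x, e i >>) ^ 2)) by (apply fsum_nonneg; intros; apply pow2_ge_0).
 assert (<< hsub x (a j), hsub x (a j) >> = << hsub v x, hsub v x >>).
 { rewrite !inner_sub_l, !inner_sub_r. rewrite Hav, Hav', Hav', Hav. rewrite (hinner_sym H x v). ring. }
 change (Vc n (fun i => << a j, e i >>)) with v in H1. lra. Qed.

End Hilb.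

Section KClos.
Variable H : RHilbert.
Variable DA : H -> Prop.
Variable T : R.
Hypothesis HDA : dense_subspace DA.

Notation "<< x , y >>" := (hinner H x y).

Lemma inK_add u v : inK DA T u -> inK DA T v -> inK DA T (fun t x => u t x + v t x).
Proof. intros [N1 [a1 [b1 [P1 [h1 [C1 E1]]]]]] [N2 [a2 [b2 [P2 [h2 [C2 E2]]]]]].
 exists (N1 + N2)%nat,
  (fun k => if Nat.ltb k N1 then a1 k else a2 (k - N1)%nat),
  (fun k => if Nat.ltb k N1 then b1 k else b2 (k - N1)%nat),
  (fun k => if Nat.ltb k N1 then P1 k else P2 (k - N1)%nat),
  (fun k => if Nat.ltb k N1 then h1 k else h2 (k - N1)%nat). split.
 - intros k Hk. destruct (Nat.ltb_spec k N1). apply C1; auto. apply C2; lia.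
 - intros t x. rewrite fsum_app, E1, E2. f_equal; apply fsum_ext; intros k Hk.
   + destruct (Nat.ltb_spec k N1); [auto|lia].
   + destruct (Nat.ltb_spec (N1 + k) N1); [lia|]. replace (N1 + k - N1)%nat with k by lia. auto. Qed.

Lemma C1_H_const (h : H) : C1_H (fun _ => h).
Proof. exists (fun _ => hzero H). split.
 - intros t ep Hep. exists 1. split; [lra|]. intros s _ _. unfold hnorm.
   set (v := hsub (hscal H (/ s) (hsub h h)) (hzero H)).
   assert (<< v, v >> = 0). { unfold v. rewrite !inner_sub_l, !inner_sub_r, !hinner_scal_l, !inner_sub_l, !inner_zero_l, !inner_zero_r. ring. }
   rewrite H0, sqrt_0. lra.
 - intros t ep Hep. exists 1. split; [lra|]. intros. unfold hnorm.
   rewrite inner_sub_l, !inner_sub_r, !inner_zero_l. replace (0 - 0 - (0 - 0)) with 0 by ring.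
   rewrite sqrt_0. lra. Qed.

Lemma periodic_const (h : H) : periodic T (fun _ : R => h).
Proof. intros t; auto. Qed.

Inductive KK : (R -> H -> R) -> Prop :=
| KK_basic Phi a b h : C1_real Phi -> periodic T Phi -> DA h ->
    KK (fun t x => Phi t * (a * cos (<< x, h >>) - b * sin (<< x, h >>)))
| KK_add u v : KK u -> KK v -> KK (fun t x => u t x + v t x)
| KK_ext u v : KK u -> (forall t x, u t x = v t x) -> KK v.

Lemma KK_inK u : KK u -> inK DA T u.
Proof. induction 1.
 - exists 1%nat, (fun _ => a), (fun _ => b), (fun _ => Phi), (fun _ _ => h). split.
   + intros k Hk. repeat split; auto. apply C1_H_const.
   + intros; simpl; ring.
 - apply inK_add; auto.
 - destruct IHKK as [N [a [b [P [h [C E]]]]]]. exists N, a, b, P, h. split; auto.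
   intros. rewrite <- H1. auto. Qed.

Lemma C1_const c : C1_real (fun _ => c).
Proof. exists (fun _ => 0). split. intros; apply derivable_pt_lim_const. intros x; apply continuity_const. intros ? ?; auto. Qed.

Lemma KK_zero : KK (fun _ _ => 0).
Proof. eapply KK_ext. apply (KK_basic (fun _ => 0) 0 0 (hzero H)). apply C1_const. intros ?; auto.
 destruct HDA; auto. intros; simpl; ring. Qed.

Inductive TL : (H -> R) -> Prop :=
| TL_basic a b h : DA h -> TL (fun x => a * cos (<< x, h >>) - b * sin (<< x, h >>))
| TL_add f g : TL f -> TL g -> TL (fun x => f x + g x)
| TL_ext f g : TL f -> (forall x, f x = g x) -> TL g.

Lemma DA_add x y : DA x -> DA y -> DA (hadd H x y).
Proof. destruct HDA as [_ [A _]]. auto. Qed.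
Lemma DA_scal c x : DA x -> DA (hscal H c x).
Proof. destruct HDA as [_ [_ [S _]]]. auto. Qed.
Lemma DA_zero : DA (hzero H).
Proof. destruct HDA; auto. Qed.
Lemma DA_sub x y : DA x -> DA y -> DA (hsub x y).
Proof. intros. unfold hsub. assert (hopp H y = hscal H (-1) y).
 {
   assert (E : hadd H y (hscal H (-1) y) = hzero H).
   { rewrite <- (hscal_one H y) at 1. rewrite <- hscal_distr_s. replace (1 + -1) with 0 by ring.
     apply hinner_def. rewrite hinner_scal_l. ring. }
   transitivity (hadd H (hopp H y) (hzero H)). rewrite hadd_zero; auto.
   rewrite <- E. rewrite hadd_assoc. rewrite (hadd_comm H (hopp H y) y), hadd_opp.
   rewrite hadd_comm, hadd_zero. auto. }
 rewrite H2. apply DA_add; auto. apply DA_scal; auto. Qed.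

Lemma TL_const c : TL (fun _ => c).
Proof. eapply TL_ext. apply (TL_basic c 0 (hzero H) DA_zero). intros; simpl. rewrite inner_zero_r, cos_0. ring. Qed.

Lemma TL_scal c f : TL f -> TL (fun x => c * f x).
Proof. induction 1.
 - eapply TL_ext. apply (TL_basic (c * a) (c * b) h); auto. intros; simpl; ring.
 - eapply TL_ext. apply (TL_add _ _ IHTL1 IHTL2). intros; simpl; ring.
 - eapply TL_ext; eauto. intros; simpl; rewrite H1; auto. Qed.

Lemma TL_mul_basic a b h f : DA h -> TL f -> TL (fun x => (a * cos (<< x, h >>) - b * sin (<< x, h >>)) * f x).
Proof. intros Hh. induction 1.
 - rename a0 into c, b0 into d, h0 into k.
   eapply TL_ext. apply TL_add.
   apply (TL_basic ((a*c - b*d)/2) ((a*d + b*c)/2) (hadd H h k)). apply DA_add; auto.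
   apply (TL_basic ((a*c + b*d)/2) ((b*c - a*d)/2) (hsub h k)). apply DA_sub; auto.
   intros x. simpl. rewrite inner_add_r, inner_sub_r. rewrite cos_plus, sin_plus, cos_minus, sin_minus. field.
 - eapply TL_ext. apply (TL_add _ _ IHTL1 IHTL2). intros; simpl; ring.
 - eapply TL_ext; eauto. intros; simpl; rewrite H1; auto. Qed.

Lemma TL_mul f g : TL f -> TL g -> TL (fun x => f x * g x).
Proof. intros Hf Hg. induction Hf.
 - apply TL_mul_basic; auto.
 - eapply TL_ext. apply (TL_add _ _ IHHf1 IHHf2). intros; simpl; ring.
 - eapply TL_ext; eauto. intros; simpl; rewrite H0; auto. Qed.

Lemma TL_pow f m : TL f -> TL (fun x => f x ^ m).
Proof. intros. induction m. apply (TL_ext _ _ (TL_const 1)); intros; simpl; auto. eapply TL_ext. apply TL_mul. apply H0. apply IHm. intros; simpl; auto. Qed.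

Lemma TL_cos_aff al be v : DA v -> TL (fun x => cos (al * << x, v >> + be)).
Proof. intros. eapply TL_ext. apply (TL_basic (cos be) (sin be) (hscal H al v)). apply DA_scal; auto.
 intros x. simpl. rewrite inner_scal_r, cos_plus. ring. Qed.

Lemma KK_Phi_TL Phi f : C1_real Phi -> periodic T Phi -> TL f -> KK (fun t x => Phi t * f x).
Proof. intros HP HPp. induction 1.
 - apply KK_basic; auto.
 - eapply KK_ext. apply (KK_add _ _ IHTL1 IHTL2). intros; simpl; ring.
 - eapply KK_ext; eauto. intros; simpl; rewrite H1; auto. Qed.

Lemma KK_fsum M (G : nat -> R -> H -> R) : (forall j, KK (G j)) -> KK (fun t x => fsum M (fun j => G j t x)).
Proof. intros. induction M; simpl. apply KK_zero. apply (KK_add _ _ IHM (H0 M)). Qed.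

Lemma KK_msum N d (F : (nat -> nat) -> R -> H -> R) : (forall J, KK (F J)) -> KK (fun t x => msum N d (fun J => F J t x)).
Proof. revert F. induction d; intros F HF; simpl. apply HF.
 apply (KK_fsum N (fun j t x => msum N d (fun J => F (upd J d j) t x))). intros j. apply (IHd (fun J => F (upd J d j))). auto. Qed.

End KClos.
Lemma C1_kernel C om g m : C1_real (fun t => C * ((1 + cos (om * t - g))/2)^m).
Proof.
 exists (fun t => C * (INR m * ((1 + cos (om * t - g))/2) ^ pred m) * ((- sin (om * t - g) * om) / 2)). split.
 - intros t.
   assert (D1 : derivable_pt_lim (minus_fct (fun t => om * t) (fun _ => g)) t (om * 1 - 0)).
   { apply derivable_pt_lim_minus. apply derivable_pt_lim_scal, derivable_pt_lim_id. apply derivable_pt_lim_const. }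
   replace (om * 1 - 0) with om in D1 by ring.
   assert (D3 : derivable_pt_lim (mult_real_fct (/2) (plus_fct (fun _ => 1) cos)) (om * t - g) (/2 * (0 + - sin (om * t - g)))).
   { apply derivable_pt_lim_scal. apply derivable_pt_lim_plus. apply derivable_pt_lim_const. apply derivable_pt_lim_cos. }
   assert (D2 := derivable_pt_lim_comp _ _ _ _ _ D1 D3).
   assert (D4 : derivable_pt_lim (mult_real_fct C (fun y => y ^ m)) ((comp (mult_real_fct (/2) (plus_fct (fun _ => 1) cos)) (minus_fct (fun t => om * t) (fun _ => g))) t)
       (C * (INR m * ((comp (mult_real_fct (/2) (plus_fct (fun _ => 1) cos)) (minus_fct (fun t => om * t) (fun _ => g))) t) ^ pred m))).
   { apply derivable_pt_lim_scal. apply derivable_pt_lim_pow. }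
   assert (D5 := derivable_pt_lim_comp _ _ _ _ _ D2 D4).
   eapply derivable_pt_lim_ext; [| replace (C * (INR m * ((1 + cos (om * t - g)) / 2) ^ pred m) * (- sin (om * t - g) * om / 2)) with
    (C * (INR m * comp (mult_real_fct (/ 2) (plus_fct (fun _ : R => 1) cos)) (minus_fct (fun t0 : R => om * t0) (fun _ : R => g)) t ^ pred m) *
        (/ 2 * (0 + - sin (om * t - g)) * om)); [exact D5|] ].
   intros z. unfold comp, mult_real_fct, plus_fct, minus_fct. cbv beta. 
   replace (/ 2 * (1 + cos (om * z - g))) with ((1 + cos (om * z - g)) / 2) by field. reflexivity.
   unfold comp, mult_real_fct, plus_fct, minus_fct. cbv beta.
   replace (/ 2 * (1 + cos (om * t - g))) with ((1 + cos (om * t - g)) / 2) by field. field.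
 - intros t. reg.
Qed.

Section Main.
Variables (H : RHilbert) (DA : H -> Prop) (T : R) (f : R -> H -> R) (Sb : R) (a : nat -> H) (mm : nat -> nat).
Hypotheses (HT : T > 0) (HDA : dense_subspace DA) (Hper : forall t x, f (t + T) x = f t x)
  (HSb : forall t x, Rabs (f t x) <= Sb) (HaDA : forall j, DA (a j)).

Notation "<< x , y >>" := (hinner H x y).
Definition ee := e H a.
Definition Lr (n : nat) := INR n + 1.
Definition zc n t x i := if Nat.ltb i n then PI * << x, ee i >> / Lr n + PI else 2 * PI * t / T.
Definition wt n t x i j := kw (mm n) (S (mm n)) (zc n t x i) j / kZ (mm n).
Definition cJ n (J : nat -> nat) := f (T * INR (J n) / INR (S (mm n))) (Vc H a n (fun i => Lr n / PI * (grid (S (mm n)) (J i) - PI))).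
Definition U n t x := msum (S (mm n)) (S n) (fun J => cJ n J * fprod (S n) (fun i => wt n t x i (J i))).

Lemma wt_sum n t x i : fsum (S (mm n)) (fun j => wt n t x i j) = 1.
Proof. unfold wt. unfold Rdiv. rewrite (fsum_ext _ _ (fun j => / kZ (mm n) * kw (mm n) (S (mm n)) (zc n t x i) j)) by (intros; ring).
 rewrite fsum_scal, kZ_const. pose proof (kZ_ge1 (mm n)). field. lra. Qed.

Lemma wt_nonneg n t x i j : 0 <= wt n t x i j.
Proof. unfold wt. pose proof (kZ_ge1 (mm n)). apply Rmult_le_pos. apply kw_nonneg. left; apply Rinv_0_lt_compat; lra. Qed.

Lemma sumW n t x : msum (S (mm n)) (S n) (fun J => fprod (S n) (fun i => wt n t x i (J i))) = 1.
Proof. rewrite (msum_prod _ _ (fun i j => wt n t x i j)). apply fprod_one. intros; apply wt_sum. Qed.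

Lemma S_nonneg : 0 <= Sb.
Proof. pose proof (HSb 0 (hzero H)). pose proof (Rabs_pos (f 0 (hzero H))). lra. Qed.

Lemma U_bound n t x : Rabs (U n t x) <= Sb.
Proof. unfold U. eapply Rle_trans. apply msum_abs.
 eapply Rle_trans. apply msum_le with (G := fun J => Sb * fprod (S n) (fun i => wt n t x i (J i))).
 intros J _. rewrite Rabs_mult. rewrite (Rabs_right (fprod _ _)).
 apply Rmult_le_compat_r. apply fprod_nonneg; intros; apply wt_nonneg. apply HSb.
 apply Rle_ge, fprod_nonneg; intros; apply wt_nonneg.
 rewrite msum_scal, sumW. lra. Qed.

Lemma vsum_DA n g : (forall i, (i < n)%nat -> DA (g i)) -> DA (vsum H n g).
Proof. induction n; simpl; intros. apply DA_zero; auto. apply DA_add; auto. Qed.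

Lemma ee_DA : forall i, DA (ee i).
Proof. intros i. induction i as [i IH] using lt_wf_ind.
 unfold ee. rewrite e_def. unfold normz. apply DA_scal; auto. apply DA_sub; auto.
 unfold P, proj. apply vsum_DA. intros i0 H0. apply (DA_scal H DA HDA). apply (IH i0 H0). Qed.

Lemma TL_fprod d (g : nat -> H -> R) : (forall i, TL H DA (g i)) -> TL H DA (fun x => fprod d (fun i => g i x)).
Proof. intros. induction d; simpl. apply (TL_const H DA HDA). apply (TL_mul H DA HDA); auto. Qed.

Lemma U_inK n : inK DA T (U n).
Proof. apply (KK_inK H DA T). set (N := S (mm n)).
 eapply KK_ext.
 - apply (KK_msum H DA T HDA N (S n) (fun J t x =>
     (cJ n J / kZ (mm n) * ((1 + cos (2 * PI / T * t - grid N (J n))) / 2) ^ (mm n)) *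
     fprod n (fun i => / kZ (mm n) * ((1 + cos (PI / Lr n * << x, ee i >> + (PI - grid N (J i)))) / 2) ^ (mm n)))).
   intros J. apply KK_Phi_TL. auto. apply C1_kernel.
   + intros t. f_equal. f_equal. f_equal. f_equal.
     replace (2 * PI / T * (t + T) - grid N (J n)) with ((2 * PI / T * t - grid N (J n)) + 2 * INR 1 * PI).
     apply cos_period. simpl INR. field. lra.
   + apply TL_fprod. intros i. apply (TL_scal H DA). apply (TL_pow H DA HDA).
     eapply TL_ext. apply (TL_scal H DA (/2)). apply TL_add. apply (TL_const H DA HDA 1).
     apply (TL_cos_aff H DA HDA (PI / Lr n) (PI - grid N (J i)) (ee i)). apply ee_DA.
     intros; simpl; field.
 - intros t x. unfold U. apply msum_ext. intros J. cbn [fprod].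
   rewrite (fprod_ext n (fun i => wt n t x i (J i)) (fun i => / kZ (mm n) * ((1 + cos (PI / Lr n * << x, ee i >> + (PI - grid N (J i)))) / 2) ^ (mm n))).
   unfold wt, zc. rewrite Nat.ltb_irrefl. unfold kw. fold N. replace (2 * PI * t / T) with (2 * PI / T * t) by (field; lra). pose proof (kZ_ge1 (mm n)). field. lra.
   intros i Hi. unfold wt, zc, kw. fold N. destruct (Nat.ltb_spec i n); [|lia].
   replace (PI * << x, ee i >> / Lr n + PI - grid N (J i)) with (PI / Lr n * << x, ee i >> + (PI - grid N (J i))). field. pose proof (kZ_ge1 (mm n)). lra.
   field. unfold Lr. pose proof (pos_INR n). lra.
Qed.

Lemma f_Zper k s y : f (s + IZR k * T) y = f s y.
Proof.
 assert (Hn : forall m s, f (s + INR m * T) y = f s y).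
 { induction m; intros s0. simpl. rewrite Rmult_0_l, Rplus_0_r; auto.
   rewrite S_INR. replace (s0 + (INR m + 1) * T) with ((s0 + INR m * T) + T) by ring. rewrite Hper; auto. }
 destruct (Z_le_gt_dec 0 k).
 - rewrite <- (Z2Nat.id k) by auto. rewrite <- INR_IZR_INZ. auto.
 - rewrite <- (Hn (Z.to_nat (- k))). rewrite INR_IZR_INZ, Z2Nat.id by lia. rewrite opp_IZR. f_equal. ring. Qed.

Lemma msum_fsum N d M (G : nat -> (nat -> nat) -> R) :
  msum N d (fun J => fsum M (fun i => G i J)) = fsum M (fun i => msum N d (G i)).
Proof. induction M; simpl. clear. induction d; simpl; auto. rewrite (fsum_ext _ _ (fun _ => 0)). rewrite fsum_const; ring.
 intros; apply IHd. rewrite msum_plus, IHM. auto. Qed.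

Definition dl (n : nat) := PI / (4 * (INR n + 1) ^ 3).
Lemma dl_bounds n : 0 < dl n <= PI / 4.
Proof. unfold dl. pose proof PI_RGT_0. pose proof (pos_INR n).
 assert (1 <= (INR n + 1) ^ 3). { apply Rle_trans with (1 ^ 3). simpl; lra. apply pow_incr. lra. }
 split. apply Rdiv_lt_0_compat; lra. apply Rmult_le_reg_r with (4 * (INR n + 1) ^ 3). lra.
 unfold Rdiv. rewrite Rmult_assoc, Rinv_l by lra. replace (PI * / 4 * (4 * (INR n + 1) ^ 3)) with (PI * (INR n + 1) ^ 3) by field. nra. Qed.

Definition far n t x i j := if Rle_dec (cos (zc n t x i - grid (S (mm n)) j)) (cos (dl n)) then 1 else 0.
Definition qq n := (1 + cos (dl n)) / 2.

Lemma far_mass n t x i0 : (i0 < S n)%nat ->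
  msum (S (mm n)) (S n) (fun J => fprod (S n) (fun i => wt n t x i (J i)) * far n t x i0 (J i0)) <= INR (S (mm n)) * qq n ^ (mm n).
Proof. intros Hi0.
 rewrite (msum_ext _ _ _ (fun J => fprod (S n) (fun i => (fun i j => wt n t x i j * (if Nat.eqb i i0 then far n t x i0 j else 1)) i (J i)))).
 2:{ intros J. rewrite <- (fprod_mark (S n) (fun i => wt n t x i (J i)) i0 (far n t x i0 (J i0)) Hi0). apply fprod_ext. intros i Hi. destruct (Nat.eqb_spec i i0); subst; auto. }
 rewrite (msum_prod _ _ (fun i j => wt n t x i j * (if Nat.eqb i i0 then far n t x i0 j else 1))). eapply Rle_trans. apply fprod_le_one with (i0 := i0); auto.
 - intros l Hl. split. apply fsum_nonneg. intros. cbv beta. apply Rmult_le_pos. apply wt_nonneg.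
   destruct (Nat.eqb l i0); [unfold far; destruct Rle_dec|]; lra.
   apply Rle_trans with (fsum (S (mm n)) (fun j => wt n t x l j)); [|rewrite wt_sum; lra].
   apply fsum_le. intros. cbv beta. pose proof (wt_nonneg n t x l i).
   destruct (Nat.eqb l i0); [unfold far; destruct Rle_dec|]; lra.
 - rewrite Nat.eqb_refl. rewrite <- fsum_const. apply fsum_le. intros j Hj.
   unfold far. destruct Rle_dec. rewrite Rmult_1_r. unfold wt. pose proof (kZ_ge1 (mm n)).
   pose proof (kw_far (mm n) (S (mm n)) (zc n t x i0) j (dl n) r). pose proof (kw_nonneg (mm n) (S (mm n)) (zc n t x i0) j).
   unfold qq. apply Rle_trans with (kw (mm n) (S (mm n)) (zc n t x i0) j); auto.
   unfold Rdiv. rewrite <- (Rmult_1_r (kw _ _ _ _)) at 2. apply Rmult_le_compat_l; auto.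
   rewrite <- Rinv_1. apply Rinv_le_contravar; lra.
   rewrite Rmult_0_r. apply pow_le. unfold qq. pose proof (COS_bound (dl n)). lra. Qed.

Lemma k_zero (z g d : R) (k : Z) : PI/2 < z < 3*PI/2 -> 0 <= g < 2*PI -> 0 < d <= PI/4 ->
  Rabs (z - g - 2 * PI * IZR k) < d -> k = 0%Z.
Proof. intros Hz Hg Hd Hk. pose proof PI_RGT_0 as Hpi. apply Rabs_def2 in Hk as [Hk1 Hk2].
 assert (A1 : IZR k < 1). { apply Rmult_lt_reg_l with (2*PI). lra. lra. }
 assert (A2 : -1 < IZR k). { apply Rmult_lt_reg_l with (2*PI). lra. lra. }
 apply lt_IZR in A1. apply lt_IZR in A2. lia. Qed.

Lemma grid_bounds N j : (j < N)%nat -> 0 <= grid N j < 2 * PI.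
Proof. intros. unfold grid. pose proof PI_RGT_0. assert (0 < INR N) by (apply lt_0_INR; lia).
 assert (INR j < INR N) by (apply lt_INR; lia). pose proof (pos_INR j). split.
 apply Rmult_le_pos; [nra| left; apply Rinv_0_lt_compat; lra].
 apply Rmult_lt_reg_r with (INR N); auto. unfold Rdiv. rewrite Rmult_assoc, Rinv_l by lra. nra. Qed.

Lemma U_err n t x eps eta : 0 < eps -> 0 < eta ->
  (forall s y, Rabs (s - t) < eta -> hnorm (hsub y x) < eta -> Rabs (f s y - f t x) < eps) ->
  << x, x >> < (INR n + 1) / 4 ->
  T * dl n / (2 * PI) < eta ->
  << hsub x (P H a n x), hsub x (P H a n x) >> + INR n * (Lr n * dl n / PI) ^ 2 < eta ^ 2 ->
  Rabs (U n t x - f t x) <= eps + 2 * Sb * (INR (S n) * (INR (S (mm n)) * qq n ^ (mm n))).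
Proof. intros Heps Heta Hc Hx Ht Hd.
 set (N := S (mm n)). set (W := fun J => fprod (S n) (fun i => wt n t x i (J i))).
 assert (E1 : U n t x - f t x = msum N (S n) (fun J => W J * (cJ n J - f t x))).
 { rewrite (msum_ext _ _ _ (fun J => cJ n J * W J + (-1) * (f t x * W J))) by (intros; ring).
   rewrite msum_plus, !msum_scal. unfold W, N. rewrite sumW. unfold U. ring. }
 assert (HSb0 := S_nonneg).
 assert (HLr : 0 < Lr n) by (unfold Lr; pose proof (pos_INR n); lra).
 pose proof PI_RGT_0 as Hpi. pose proof (dl_bounds n) as Hdl.
 assert (HNp : 0 < INR N) by (apply lt_0_INR; unfold N; lia).
 assert (PW : forall J, (forall i, (i < S n)%nat -> (J i < N)%nat) ->
   Rabs (cJ n J - f t x) <= eps + 2 * Sb * fsum (S n) (fun i => far n t x i (J i))).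
 { intros J HJ.
   assert (Hfs : 0 <= fsum (S n) (fun i => far n t x i (J i))) by (apply fsum_nonneg; intros; unfold far; destruct Rle_dec; lra).
   destruct (classic (exists i, (i < S n)%nat /\ cos (zc n t x i - grid N (J i)) <= cos (dl n))) as [[i [Hi Hfar]] | Hnear].
   - assert (1 <= fsum (S n) (fun i => far n t x i (J i))).
     { replace 1 with (far n t x i (J i)). apply (fsum_le_term (S n) (fun i => far n t x i (J i))); auto.
       intros; unfold far; destruct Rle_dec; lra. unfold far; destruct Rle_dec; [auto|contradiction]. }
     assert (Rabs (cJ n J - f t x) <= 2 * Sb).
     { unfold Rminus. eapply Rle_trans. apply Rabs_triang. rewrite Rabs_Ropp. unfold cJ. pose proof (HSb t x).
       pose proof (HSb (T * INR (J n) / INR (S (mm n))) (Vc H a n (fun i : nat => Lr n / PI * (grid (S (mm n)) (J i) - PI)))). lra. }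
     nra.
   - assert (Hn : forall i, (i < S n)%nat -> cos (zc n t x i - grid N (J i)) > cos (dl n)).
     { intros i Hi. apply Rnot_le_gt. intros C. apply Hnear. exists i; auto. }
     destruct (cos_near (zc n t x n - grid N (J n)) (dl n) ltac:(lra) (Hn n ltac:(lia))) as [k Hk].
     unfold zc in Hk. rewrite Nat.ltb_irrefl in Hk.
     set (c := fun i => Lr n / PI * (grid N (J i) - PI)).
     set (X := Vc H a n c).
     assert (EC : cJ n J = f (T * INR (J n) / INR N + IZR k * T) X) by (rewrite f_Zper; auto).
     assert (Hs : Rabs (T * INR (J n) / INR N + IZR k * T - t) < eta).
     { replace (T * INR (J n) / INR N + IZR k * T - t) with (- (T / (2 * PI)) * (2 * PI * t / T - grid N (J n) - 2 * PI * IZR k)).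
       rewrite Rabs_mult, Rabs_Ropp, Rabs_right. apply Rle_lt_trans with (T / (2*PI) * dl n).
       apply Rmult_le_compat_l. left; apply Rdiv_lt_0_compat; lra. lra.
       replace (T / (2 * PI) * dl n) with (T * dl n / (2 * PI)) by (field; lra). auto.
       left; apply Rdiv_lt_0_compat; lra. unfold grid. field. lra. }
     assert (HX : << hsub X x, hsub X x >> < eta ^ 2).
     { unfold X. rewrite dist_Vc. eapply Rle_lt_trans; [|apply Hd]. apply Rplus_le_compat_l.
       rewrite <- fsum_const. apply fsum_le. intros i Hi.
       set (y := << x, e H a i >>).
       assert (Hy2 : y ^ 2 <= << x, x >>) by (apply (coord_bound H a (S i)); lia).
       assert (Hy : Rabs y < Lr n / 2).
       { apply Rnot_le_lt. intros C. assert (y ^ 2 >= (Lr n / 2)^2).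
         { rewrite <- (pow2_abs y). apply Rle_ge, pow_incr. lra. }
         unfold Lr in *. pose proof (pos_INR n). nra. }
       pose proof (Hn i ltac:(lia)) as Hni. unfold zc in Hni. destruct (Nat.ltb_spec i n); [|lia].
       destruct (cos_near _ (dl n) ltac:(lra) Hni) as [ki Hki].
       unfold ee in Hki. fold y in Hki.
       assert (Hz : PI / 2 < PI * y / Lr n + PI < 3 * PI / 2).
       { apply Rabs_def2 in Hy as [Hy1 Hy2']. split.
         - apply Rplus_lt_reg_r with (- PI). replace (PI / 2 + - PI) with (PI * (- (Lr n / 2)) / Lr n) by (field; lra).
           replace (PI * y / Lr n + PI + - PI) with (PI * y / Lr n) by ring.
           unfold Rdiv. apply Rmult_lt_compat_r. apply Rinv_0_lt_compat; lra. nra.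
         - apply Rplus_lt_reg_r with (- PI). replace (3 * PI / 2 + - PI) with (PI * (Lr n / 2) / Lr n) by (field; lra).
           replace (PI * y / Lr n + PI + - PI) with (PI * y / Lr n) by ring.
           unfold Rdiv. apply Rmult_lt_compat_r. apply Rinv_0_lt_compat; lra. nra. }
       pose proof (k_zero _ _ _ ki Hz (grid_bounds N (J i) (HJ i ltac:(lia))) Hdl Hki). subst ki.
       rewrite Rmult_0_r, Rminus_0_r in Hki.
       assert (Hcy : Rabs (c i - y) <= Lr n * dl n / PI).
       { unfold c. replace (Lr n / PI * (grid N (J i) - PI) - y) with (- (Lr n / PI) * (PI * y / Lr n + PI - grid N (J i))) by (field; lra).
         rewrite Rabs_mult, Rabs_Ropp, Rabs_right. replace (Lr n * dl n / PI) with (Lr n / PI * dl n) by (field; lra).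
         apply Rmult_le_compat_l. left; apply Rdiv_lt_0_compat; lra. lra. left; apply Rdiv_lt_0_compat; lra. }
       assert ((c i - y) ^ 2 <= (Lr n * dl n / PI) ^ 2).
       { rewrite <- (pow2_abs (c i - y)). apply pow_incr. split; [apply Rabs_pos|auto]. }
       destruct (eps01 H a i) as [E|E]; rewrite E.
       + unfold y. rewrite (eps_zero H a i x E). replace ((c i * 0 - 0) ^ 2) with 0 by ring. apply pow2_ge_0.
       + rewrite Rmult_1_r. auto. }
     assert (HXn : hnorm (hsub X x) < eta).
     { unfold hnorm. rewrite <- (sqrt_pow2 eta) by lra. apply sqrt_lt_1. apply hinner_pos. apply pow2_ge_0. auto. }
     rewrite EC. pose proof (Hc _ _ Hs HXn). nra. }
 rewrite E1. eapply Rle_trans. apply msum_abs.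
 eapply Rle_trans. apply msum_le with (G := fun J => eps * W J + 2 * Sb * fsum (S n) (fun i => W J * far n t x i (J i))).
 { intros J HJ. rewrite Rabs_mult, (Rabs_right (W J)). rewrite fsum_scal.
   assert (0 <= W J) by (apply fprod_nonneg; intros; apply wt_nonneg).
   pose proof (PW J HJ). nra. apply Rle_ge, fprod_nonneg; intros; apply wt_nonneg. }
 rewrite msum_plus, !msum_scal. unfold W at 1. unfold N. rewrite sumW. rewrite msum_fsum.
 rewrite Rmult_1_r. apply Rplus_le_compat_l. apply Rmult_le_compat_l. lra.
 rewrite <- fsum_const. apply fsum_le. intros i Hi. apply far_mass. auto.
Qed.


End Main.

Lemma div_lt a b c : 0 < b -> a < c * b -> a / b < c.
Proof. intros. unfold Rdiv. apply Rmult_lt_reg_r with b; auto. rewrite Rmult_assoc, Rinv_l; lra. Qed.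
Lemma lt_of_div a b c : 0 < b -> a / b < c -> a < c * b.
Proof. intros. unfold Rdiv in H0. apply Rmult_lt_compat_r with (r := b) in H0; auto. rewrite Rmult_assoc, Rinv_l in H0; lra. Qed.

Lemma paral (H : RHilbert) (x y z : H) :
  hinner H (hsub x z) (hsub x z) <= 2 * hinner H (hsub x y) (hsub x y) + 2 * hinner H (hsub y z) (hsub y z).
Proof. pose proof (hinner_pos H (hsub (hsub x y) (hsub y z))).
 rewrite !inner_sub_l, !inner_sub_r in *.
 pose proof (hinner_sym H x y). pose proof (hinner_sym H x z). pose proof (hinner_sym H y z). lra. Qed.

Lemma small_inv r : 0 < r -> exists k : nat, / (INR k + 1) < r.
Proof. intros. destruct (archimed (/ r)) as [H1 _]. exists (Z.to_nat (up (/ r))).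
 assert (0 < / r) by (apply Rinv_0_lt_compat; auto).
 assert (INR (Z.to_nat (up (/ r))) = IZR (up (/r))).
 { rewrite INR_IZR_INZ, Z2Nat.id; auto. apply le_IZR. lra. }
 rewrite H2. rewrite <- (Rinv_inv r) at 2. apply Rinv_lt_contravar. apply Rmult_lt_0_compat; lra. lra. Qed.

Lemma norm_lt_sq (H : RHilbert) (v : H) r : hnorm v < r -> hinner H v v < r ^ 2.
Proof. intros. unfold hnorm in H0. pose proof (hinner_pos H v).
 rewrite <- (sqrt_sqrt (hinner H v v)) by auto. pose proof (sqrt_pos (hinner H v v)). simpl. nra. Qed.

Lemma dense_seq (H : RHilbert) (DA : H -> Prop) : dense_subspace DA ->
  exists a : nat -> H, (forall j, DA (a j)) /\
    forall x eps, eps > 0 -> exists j, hinner H (hsub x (a j)) (hsub x (a j)) < eps.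
Proof. intros HDA. destruct (hseparable H) as [d Hd]. destruct HDA as [_ [_ [_ Hden]]].
 assert (Hex : forall n k, exists z, DA z /\ hnorm (hsub (d n) z) < / (INR k + 1)).
 { intros. apply Hden. apply Rinv_0_lt_compat. pose proof (pos_INR k); lra. }
 set (b := fun n k => proj1_sig (constructive_indefinite_description _ (Hex n k))).
 assert (Hb : forall n k, DA (b n k) /\ hnorm (hsub (d n) (b n k)) < / (INR k + 1)).
 { intros. unfold b. destruct constructive_indefinite_description; auto. }
 exists (fun j => b (fst (of_nat j)) (snd (of_nat j))). split.
 - intros; apply Hb.
 - intros x eps Heps. set (r := sqrt eps / 2).
   assert (Hr : 0 < r) by (unfold r; pose proof (sqrt_lt_R0 eps Heps); lra).
   destruct (small_inv r Hr) as [k Hk]. destruct (Hd x r Hr) as [n Hn].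
   exists (to_nat (n, k)). rewrite cancel_of_to. cbn [fst snd].
   pose proof (paral H x (d n) (b n k)).
   pose proof (norm_lt_sq H _ _ Hn). destruct (Hb n k) as [_ Hb2].
   pose proof (norm_lt_sq H _ _ (Rlt_trans _ _ _ Hb2 Hk)).
   assert (4 * r ^ 2 = eps). { unfold r. simpl. rewrite Rmult_1_r.
     replace (4 * (sqrt eps / 2 * (sqrt eps / 2))) with (sqrt eps * sqrt eps) by field. apply sqrt_sqrt; lra. }
   change (hadd H x (hopp H (d n))) with (hsub x (d n)) in H1. lra. Qed.

Theorem mainTheorem19 (H : RHilbert) (DA : H -> Prop) (T : R)
  (HT : T > 0) (HDA : dense_subspace DA) (f : R -> H -> R) (S : R)
  (Hf : Cb_star T f) (HS : is_sup_abs f S) :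
  exists u : nat -> R -> H -> R,
    (forall n, inK DA T (u n)) /\
    (forall t x, Un_cv (fun n => u n t x) (f t x)) /\
    (forall n t x, Rabs (u n t x) <= 1 + S).
Proof.
 destruct Hf as [Hcont [_ Hper]].
 assert (HSb : forall t x, Rabs (f t x) <= S).
 { intros. destruct HS as [Hub _]. apply Hub. exists t, x; auto. }
 assert (HS0 : 0 <= S) by (pose proof (HSb 0 (hzero H)); pose proof (Rabs_pos (f 0 (hzero H))); lra).
 destruct (dense_seq H DA HDA) as [a [HaDA Ha]].
 assert (Hq : forall n, 0 < qq n < 1).
 { intros n. pose proof (dl_bounds n). pose proof PI_RGT_0. unfold qq.
   assert (cos (dl n) < 1) by (rewrite <- cos_0; apply cos_decreasing_1; lra).
   assert (cos PI < cos (dl n)) by (apply cos_decreasing_1; lra). rewrite cos_PI in H3. lra. }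
 assert (Hm : forall n, exists m, INR (Datatypes.S m) * qq n ^ m <= / (INR n + 1) ^ 2).
 { intros n. destruct (geom_small (qq n) (/ (INR n + 1) ^ 2) (Hq n)) as [m [_ Hm]].
   apply Rinv_0_lt_compat. pose proof (pos_INR n). apply pow_lt. lra. exists m; auto. }
 set (mm := fun n => proj1_sig (constructive_indefinite_description _ (Hm n))).
 assert (Hmm : forall n, INR (Datatypes.S (mm n)) * qq n ^ (mm n) <= / (INR n + 1) ^ 2).
 { intros. unfold mm. destruct constructive_indefinite_description; auto. }
 exists (U H T f a mm). split; [|split].
 - intros n. apply U_inK; auto.
 - intros t x eps Heps.
   destruct (Hcont t x (eps / 2) ltac:(lra)) as [eta [Heta Hc]].
   destruct (Ha x (eta ^ 2 / 2)) as [j Hj]. assert (0 < eta ^ 2) by (apply pow_lt; lra). lra.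
   set (K := 4 * hinner H x x + T / (8 * eta) + 1 / (8 * eta ^ 2) + 4 * S / eps + INR j + 1).
   assert (Hxx := hinner_pos H x).
   assert (HK0 : 0 <= K).
   { unfold K. assert (0 < T / (8 * eta)) by (apply Rdiv_lt_0_compat; lra).
     assert (0 < 1 / (8 * eta^2)) by (apply Rdiv_lt_0_compat; [lra| assert (0 < eta^2) by (apply pow_lt; lra); lra]).
     assert (0 <= 4 * S / eps) by (apply Rmult_le_pos; [lra| left; apply Rinv_0_lt_compat; lra]).
     pose proof (pos_INR j). lra. }
   destruct (archimed K) as [HK1 _].
   exists (Z.to_nat (up K)). intros n Hn. unfold R_dist.
   assert (HnK : K < INR n).
   { apply Rlt_le_trans with (IZR (up K)); [lra|]. rewrite <- (Z2Nat.id (up K)) by (apply le_IZR; lra).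
     rewrite <- INR_IZR_INZ. apply le_INR. lia. }
   set (r := INR n + 1).
   assert (Hr1 : 1 <= r) by (unfold r; pose proof (pos_INR n); lra).
   assert (HrK : K < r) by (unfold r; lra).
   assert (Hjn : (j < n)%nat). { apply INR_lt. unfold K in HnK.
     assert (0 < T / (8 * eta)) by (apply Rdiv_lt_0_compat; lra).
     assert (0 < 1 / (8 * eta^2)) by (apply Rdiv_lt_0_compat; [lra| assert (0 < eta^2) by (apply pow_lt; lra); lra]).
     assert (0 <= 4 * S / eps) by (apply Rmult_le_pos; [lra| left; apply Rinv_0_lt_compat; lra]). lra. }
   assert (HT8 : 0 < T / (8 * eta)) by (apply Rdiv_lt_0_compat; lra).
   assert (He2 : 0 < eta ^ 2) by (apply pow_lt; lra).
   assert (HE8 : 0 < 1 / (8 * eta^2)) by (apply Rdiv_lt_0_compat; lra).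
   assert (HS4 : 0 <= 4 * S / eps) by (apply Rmult_le_pos; [lra| left; apply Rinv_0_lt_compat; lra]).
   pose proof (pos_INR j).
   assert (A : hinner H x x < (INR n + 1) / 4) by (fold r; unfold K in HrK; lra).
   assert (B : T < eta * (8 * r)). { apply Rlt_le_trans with (r * (8 * eta)). apply lt_of_div. lra. unfold K in HrK; lra. lra. }
   assert (C : 1 < r * (8 * eta ^ 2)). { apply lt_of_div. lra. unfold K in HrK; lra. }
   assert (D : 4 * S < r * eps). { apply lt_of_div. lra. unfold K in HrK; lra. }
   assert (Hr3 : r <= r ^ 3) by nra.
   assert (Hr4 : r ^ 2 <= r ^ 4) by nra.
   pose proof PI_RGT_0.
   assert (E1 : T * dl n / (2 * PI) = T / (8 * r ^ 3)) by (unfold dl; fold r; field; lra).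
   assert (E2 : Lr n * dl n / PI = / (4 * r ^ 2)) by (unfold dl, Lr; fold r; field; lra).
   assert (C2 : T * dl n / (2 * PI) < eta). { rewrite E1. apply div_lt. nra. nra. }
   pose proof (best_approx H a j n x Hjn) as HPx.
   assert (C3 : hinner H (hsub x (P H a n x)) (hsub x (P H a n x)) + INR n * (Lr n * dl n / PI) ^ 2 < eta ^ 2).
   { rewrite E2. assert (INR n * (/ (4 * r ^ 2)) ^ 2 < eta ^ 2 / 2).
     { replace (INR n * (/ (4 * r ^ 2)) ^ 2) with (INR n / (16 * r ^ 4)) by (field; lra).
       apply div_lt. nra. assert (INR n < r) by (unfold r; lra). nra. }
     lra. }
   pose proof (U_err H T f S a mm HT Hper HSb n t x (eps / 2) eta ltac:(lra) Heta Hc A C2 C3) as Herr.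
   eapply Rle_lt_trans. apply Herr.
   rewrite S_INR. fold r. pose proof (Hmm n).
   assert (r * (INR (Datatypes.S (mm n)) * qq n ^ mm n) <= / r).
   { apply Rle_trans with (r * / (INR n + 1) ^ 2). apply Rmult_le_compat_l; lra. fold r. right; field; lra. }
   assert (2 * S * / r < eps / 2). { apply Rmult_lt_reg_r with r. lra. rewrite Rmult_assoc, Rinv_l by lra. lra. }
   assert (2 * S * (r * (INR (Datatypes.S (mm n)) * qq n ^ mm n)) <= 2 * S * / r) by (apply Rmult_le_compat_l; lra).
   lra.
 - intros. pose proof (U_bound H T f S a mm HSb n t x). lra.
Qed.
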